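(* Let $G$ be the directed graph with vertices $v_1,v_2,v_3,\dots$ and $w_2,w_3,\dots$ (all distinct), and edges $v_i\to v_{i+1}$ for $i\ge1$, $v_1\to w_2$, and $w_i\to w_{i+1}$ for $i\ge2$, with birthdates $t(v_i)=i$ and $t(w_i)=i$. (Writing $w_1=v_1$, $G$ consists of two infinite directed paths sharing only their initial vertex.) Then $(G,t)$ is an infinite biosphere, and $v_1$ does not belong to any maximal element of $\mathrm{IAP}\cap\mathrm{CONV}\cap\mathrm{CA}$ (i.e., there is no $S\in \mathrm{IAP}\cap\mathrm{CONV}\cap\mathrm{CA}$ with $v_1\in S$ such that no proper superset of $S$ lies in $\mathrm{IAP}\cap\mathrm{CONV}\cap\mathrm{CA}$).
   Context: An infinite biosphere is a directed graph $G$ together with a function $t$ assigning a real number $t(v)$ to each vertex, such that: (1) if $v$ is a parent of $w$ (edge from $v$ to $w$) then $t(v)<t(w)$; (2) for every $r\in\mathbb R$ at most finitely many vertices $v$ have $t(v)<r$; (3) every vertex has finitely many children; (4) $G$ is infinite. $v$ is an ancestor of $w$ (and $w$ a descendant of $v$) if there is a directed path $v=v_1,\dots,v_n=w$ with $n>1$. $\mathrm{IAP}$: sets $S$ of vertices such that no $v\in S$ has both infinitely many descendants in $S$ and infinitely many non-descendants in $S$. $\mathrm{CONV}$: sets $S$ such that every vertex having an ancestor in $S$ and a descendant in $S$ lies in $S$. $\mathrm{CA}$: sets $S$ for which there exists $v\in S$ such that every $w\in S$ with $w\neq v$ is a descendant of $v$. *)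

(* Defs.v *)
From Stdlib Require Import Reals List Relations.
Open Scope R_scope.

Definition finite_pred {V : Type} (P : V -> Prop) : Prop :=
  exists l : list V, forall x, P x -> In x l.

Definition infinite_pred {V : Type} (P : V -> Prop) : Prop := ~ finite_pred P.

Definition infinite_biosphere {V : Type} (E : V -> V -> Prop) (t : V -> R) : Prop :=
  (forall v w, E v w -> t v < t w) /\
  (forall r : R, finite_pred (fun v => t v < r)) /\
  (forall v, finite_pred (fun w => E v w)) /\
  infinite_pred (fun _ : V => True).

Definition ancestor {V : Type} (E : V -> V -> Prop) : V -> V -> Prop :=
  clos_trans V E.

Definition IAP {V : Type} (E : V -> V -> Prop) (S : V -> Prop) : Prop :=
  forall v, S v ->
    ~ (infinite_pred (fun w => S w /\ ancestor E v w) /\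
       infinite_pred (fun w => S w /\ ~ ancestor E v w)).

Definition CONV {V : Type} (E : V -> V -> Prop) (S : V -> Prop) : Prop :=
  forall x, (exists a, S a /\ ancestor E a x) ->
            (exists d, S d /\ ancestor E x d) -> S x.

Definition CA {V : Type} (E : V -> V -> Prop) (S : V -> Prop) : Prop :=
  exists v, S v /\ forall w, S w -> w <> v -> ancestor E v w.

Definition IAP_CONV_CA {V : Type} (E : V -> V -> Prop) (S : V -> Prop) : Prop :=
  IAP E S /\ CONV E S /\ CA E S.

(* vv k represents v_{k+1} (k >= 0); ww k represents w_{k+2} (k >= 0). *)
Inductive vtx : Type :=
| vv : nat -> vtx
| ww : nat -> vtx.

Inductive edge : vtx -> vtx -> Prop :=
| edge_vv : forall k, edge (vv k) (vv (S k))
| edge_vw : edge (vv 0) (ww 0)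
| edge_ww : forall k, edge (ww k) (ww (S k)).

Definition tdate (x : vtx) : R :=
  match x with
  | vv k => INR (k + 1)
  | ww k => INR (k + 2)
  end.

Definition v1 : vtx := vv 0.

(* Main.v *)
Require Import Defs.
From Stdlib Require Import Reals List Relations.
From Stdlib Require Import Lia Lra Classical.

Definition idx (x : vtx) : nat := match x with vv k => k | ww k => k end.
Definition ancc (x y : vtx) : Prop :=
  match x, y with
  | vv i, vv j => (i < j)%nat
  | vv i, ww _ => i = 0%nat
  | ww i, ww j => (i < j)%nat
  | ww _, vv _ => False
  end.

Lemma anc_iff x y : ancestor edge x y <-> ancc x y.
Proof.
  split.
  - intro H. induction H.
    + destruct H; simpl; lia.
    + destruct x, y, z; simpl in *; lia.
  - destruct x as [i|i], y as [j|j]; simpl; intro H.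
    + revert H; induction j; intro H; [lia|].
      destruct (Nat.eq_dec i j).
      * subst; apply t_step; constructor.
      * apply t_trans with (vv j); [apply IHj; lia| apply t_step; constructor].
    + subst. induction j.
      * apply t_step; constructor.
      * apply t_trans with (ww j); auto. apply t_step; constructor.
    + contradiction.
    + revert H; induction j; intro H; [lia|].
      destruct (Nat.eq_dec i j).
      * subst; apply t_step; constructor.
      * apply t_trans with (ww j); [apply IHj; lia| apply t_step; constructor].
Qed.

Lemma list_bound (l : list vtx) : exists N, forall x, In x l -> (idx x < N)%nat.
Proof.
  induction l as [|a l [N H]].
  - exists 0%nat; simpl; tauto.
  - exists (Nat.max N (S (idx a))). intros x [<-|Hx]; [lia|].
    specialize (H x Hx); lia.
Qed.

Lemma fin_iff (P : vtx -> Prop) :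
  finite_pred P <-> exists N, forall x, P x -> (idx x < N)%nat.
Proof.
  split.
  - intros [l Hl]. destruct (list_bound l) as [N H]. exists N; auto.
  - intros [N H]. exists (map vv (seq 0 N) ++ map ww (seq 0 N)).
    intros x Hx; specialize (H x Hx); apply in_or_app;
      destruct x; simpl in H; [left|right]; apply in_map; apply in_seq; lia.
Qed.

Theorem mainTheorem10 :
  infinite_biosphere edge tdate /\
  ~ (exists S : vtx -> Prop,
       IAP_CONV_CA edge S /\ S v1 /\
       forall S' : vtx -> Prop, IAP_CONV_CA edge S' ->
         (forall x, S x -> S' x) -> (forall x, S' x -> S x)).
Proof.
  split; [split; [|split; [|split]]|].
  - intros v w H; destruct H; unfold tdate; apply lt_INR; lia.
  - intro r. apply fin_iff. destruct (INR_unbounded r) as [n Hn].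
    exists n. intros x Hx; destruct x as [k|k]; unfold tdate in Hx; simpl.
    + assert (INR (k+1) < INR n) as H by lra; apply INR_lt in H; lia.
    + assert (INR (k+2) < INR n) as H by lra; apply INR_lt in H; lia.
  - intro v. exists (match v with vv k => vv (S k) :: ww 0 :: nil | ww k => ww (S k) :: nil end).
    intros w H; destruct H; simpl; tauto.
  - intros Hf. apply fin_iff in Hf. destruct Hf as [N H].
    specialize (H (vv N) I). simpl in H; lia.
  - intros [S [[HI [HC HA]] [Hv Hmax]]]. unfold v1 in Hv.
    assert (D: (exists N, forall j, S (ww j) -> (j<N)%nat) \/
               (exists N, forall j, S (vv j) -> (j<N)%nat)).
    { destruct (classic (exists N, forall j, S (ww j) -> (j<N)%nat)) as [h|hw];
        [left; exact h|right].
      apply NNPP; intro hv.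
      assert (exists k, S (vv k) /\ (1 <= k)%nat) as [k [Sk k1]].
      { apply NNPP; intro C; apply hv; exists 1%nat; intros j Sj.
        destruct (Nat.lt_ge_cases j 1); auto; exfalso; apply C; eauto. }
      apply (HI (vv k) Sk). split; intro F; apply fin_iff in F; destruct F as [M HM].
      - apply hv. exists (Nat.max M (Datatypes.S k)). intros j Sj.
        destruct (Nat.lt_ge_cases k j); [|lia].
        assert (j < M)%nat; [|lia].
        apply (HM (vv j)); split; auto; apply anc_iff; simpl; lia.
      - apply hw. exists M. intros j Sj. apply (HM (ww j)). split; auto.
        intro X; apply anc_iff in X; simpl in X; lia. }
    destruct D as [[N HN]|[N HN]].
    + set (S' := fun x => S x \/ match x with ww j => (j <= N)%nat | _ => False end).
      assert (H : IAP_CONV_CA edge S').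
      { split; [|split].
        - intros x Sx [F1 F2]. destruct x as [k|k].
          + apply F2. apply fin_iff. exists (Datatypes.S (Nat.max k N)).
            intros y [Sy Ny]. destruct y as [j|j]; simpl.
            * destruct (Nat.lt_ge_cases k j); [exfalso; apply Ny; apply anc_iff; simpl; lia | lia].
            * destruct Sy as [Sy|Sy]; [apply HN in Sy|simpl in Sy]; lia.
          + apply F1. apply fin_iff. exists (Datatypes.S N). intros y [Sy Ay].
            apply anc_iff in Ay. destruct y as [j|j]; simpl in Ay; [contradiction|].
            simpl. destruct Sy as [Sy|Sy]; [apply HN in Sy|simpl in Sy]; lia.
        - intros x [a [Sa Aa]] [d [Sd Ad]].
          pose proof Aa as Aa'; pose proof Ad as Ad'.
          apply anc_iff in Aa; apply anc_iff in Ad.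
          destruct Sd as [Sd|Sd].
          + destruct Sa as [Sa|Sa].
            * left. apply HC; [exists a|exists d]; split; auto.
            * destruct a as [i|i]; simpl in Sa; [contradiction|].
              destruct x as [k|k]; simpl in Aa; [contradiction|].
              destruct d as [m|m]; simpl in Ad; [contradiction|].
              apply HN in Sd. right; simpl; lia.
          + destruct d as [m|m]; simpl in Sd; [contradiction|].
            destruct x as [k|k]; simpl in Ad.
            * left; subst; exact Hv.
            * right; simpl; lia.
        - exists (vv 0). split; [left; auto|]. intros w _ Hw. apply anc_iff.
          destruct w as [j|j]; simpl; [destruct j; [contradiction (Hw eq_refl)|lia]|reflexivity]. }
      assert (S (ww N)) as HS.
      { apply (Hmax S' H); [intros; left; auto | right; simpl; lia]. }
      apply HN in HS; lia.
    + set (S' := fun x => S x \/ match x with vv j => (j <= N)%nat | _ => False end).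
      assert (H : IAP_CONV_CA edge S').
      { split; [|split].
        - intros x Sx [F1 F2]. destruct x as [k|k].
          + destruct k as [|k].
            * apply F2. apply fin_iff. exists 1%nat.
              intros y [Sy Ny]. destruct y as [j|j]; simpl.
              -- destruct j; [lia|]. exfalso; apply Ny; apply anc_iff; simpl; lia.
              -- exfalso; apply Ny; apply anc_iff; simpl; lia.
            * apply F1. apply fin_iff. exists (Datatypes.S N). intros y [Sy Ay].
              apply anc_iff in Ay. destruct y as [j|j]; simpl in Ay; [|lia].
              simpl. destruct Sy as [Sy|Sy]; [apply HN in Sy|simpl in Sy]; lia.
          + apply F2. apply fin_iff. exists (Datatypes.S (Nat.max k N)).
            intros y [Sy Ny]. destruct y as [j|j]; simpl.
            * destruct Sy as [Sy|Sy]; [apply HN in Sy|simpl in Sy]; lia.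
            * destruct (Nat.lt_ge_cases k j); [exfalso; apply Ny; apply anc_iff; simpl; lia | lia].
        - intros x [a [Sa Aa]] [d [Sd Ad]].
          pose proof Aa as Aa'; pose proof Ad as Ad'.
          apply anc_iff in Aa; apply anc_iff in Ad.
          destruct Sd as [Sd|Sd].
          + destruct Sa as [Sa|Sa].
            * left. apply HC; [exists a|exists d]; split; auto.
            * destruct a as [i|i]; simpl in Sa; [|contradiction].
              destruct x as [k|k]; simpl in Aa.
              -- destruct d as [m|m]; simpl in Ad.
                 ++ apply HN in Sd. right; simpl; lia.
                 ++ subst; left; exact Hv.
              -- subst. left. apply HC; [exists (vv 0)|exists d]; split; auto.
          + destruct d as [m|m]; simpl in Sd; [|contradiction].
            destruct x as [k|k]; simpl in Ad; [|contradiction].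
            right; simpl; lia.
        - exists (vv 0). split; [left; auto|]. intros w _ Hw. apply anc_iff.
          destruct w as [j|j]; simpl; [destruct j; [contradiction (Hw eq_refl)|lia]|reflexivity]. }
      assert (S (vv N)) as HS.
      { apply (Hmax S' H); [intros; left; auto | right; simpl; lia]. }
      apply HN in HS; lia.
Qed.
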